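(* Let $A_4$ be the Cayley-Dickson algebra of sedenions with canonical basis $e_0,\dots,e_{15}$. Then: (i) the imaginary units lying on no defective triple are exactly $e_1,e_2,e_4,e_8,e_{15}$, and each of the remaining ten imaginary units $e_3,e_5,e_6,e_7,e_9,e_{10},e_{11},e_{12},e_{13},e_{14}$ lies on exactly three defective triples (and four ordinary ones); (ii) the incidence structure $\mathcal{D}$ whose points are these ten units and whose lines are the ten defective triples is isomorphic to the Desargues configuration $G_2(5)$; (iii) there is a bijection $\varphi$ from the set of geometric hyperplanes of $\mathcal{D}$ onto $\{e_1,\dots,e_{15}\}$ mapping the set of lines of the Veldkamp space $\mathcal{V}(\mathcal{D})$ bijectively onto the set of distinguished triples of $A_4$ (so $\mathcal{V}(\mathcal{D})\cong\mathrm{PG}(3,2)$), such that a geometric hyperplane has $4$ points (a point together with the three points not collinear with it) if and only if its image lies on some defective triple, and has $6$ points (a copy of the Pasch configuration $G_2(4)$) if and only if its image is one of $e_1,e_2,e_4,e_8,e_{15}$.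
   Context: Cayley-Dickson algebras: $A_0=\mathbb{R}$ with trivial conjugation; $A_{N+1}$ is the set of ordered pairs $(x,y)$ with $x,y\in A_N$, with conjugation $(x,y)^*=(x^*,-y)$ and multiplication $(x,y)(X,Y)=(xX-Yy^*,\,x^*Y+Xy)$. The canonical basis of $A_0$ is $e_0=1$; if $e_0,\dots,e_{2^N-1}$ is the canonical basis of $A_N$, the canonical basis of $A_{N+1}$ is $e_a=(e_a,0)$ and $e_{2^N+a}=(0,e_a)$ for $0\le a\le 2^N-1$. The imaginary units of $A_N$ are $e_1,\dots,e_{2^N-1}$. A distinguished triple is a set $\{e_a,e_b,e_c\}$ with $1\le a<b<c\le 2^N-1$ and $e_ae_b=\pm e_c$; it is called ordinary if $a+b=c$ and defective if $a+b\neq c$. The combinatorial Grassmannian $G_2(n)$ is the point-line incidence structure whose points are the $2$-element subsets of $\{1,\dots,n\}$, whose lines are the $3$-element subsets, incidence being inclusion ($G_2(4)$ is the Pasch configuration, $G_2(5)$ the Desargues configuration). A geometric hyperplane of a point-line incidence structure is a proper subset $H$ of the point set such that every line is either contained in $H$ or meets $H$ in exactly one point. The Veldkamp space $\mathcal{V}(\mathcal{C})$ has as points the geometric hyperplanes of $\mathcal{C}$; for distinct hyperplanes $H',H''$ the Veldkamp line $H'H''$ is the set of all geometric hyperplanes $H$ with $H=H'$, $H=H''$, or $H'\cap H''=H'\cap H=H''\cap H$. *)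

(* Defs.v *)
From HB Require Import structures.
From mathcomp Require Import all_boot all_order all_algebra.
From mathcomp Require Import boolp reals.

Set Implicit Arguments.
Unset Strict Implicit.
Unset Printing Implicit Defensive.
Import GRing.Theory.
Local Open Scope ring_scope.

Fixpoint CD (R : Type) (n : nat) : Type :=
  if n is m.+1 then (CD R m * CD R m)%type else R.

Section CayleyDickson.
Variable R : pzRingType.

Fixpoint cd_zero (n : nat) : CD R n :=
  match n return CD R n with
  | 0 => (0 : R)
  | m.+1 => (cd_zero m, cd_zero m)
  end.

Fixpoint cd_add (n : nat) : CD R n -> CD R n -> CD R n :=
  match n return CD R n -> CD R n -> CD R n with
  | 0 => fun x y : R => x + y
  | m.+1 => fun u v => (cd_add u.1 v.1, cd_add u.2 v.2)
  end.

Fixpoint cd_opp (n : nat) : CD R n -> CD R n :=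
  match n return CD R n -> CD R n with
  | 0 => fun x : R => - x
  | m.+1 => fun u => (cd_opp u.1, cd_opp u.2)
  end.

Fixpoint cd_conj (n : nat) : CD R n -> CD R n :=
  match n return CD R n -> CD R n with
  | 0 => fun x : R => x
  | m.+1 => fun u => (cd_conj u.1, cd_opp u.2)
  end.

(* (x,y)(X,Y) = (xX - Y y^*, x^* Y + X y) *)
Fixpoint cd_mul (n : nat) : CD R n -> CD R n -> CD R n :=
  match n return CD R n -> CD R n -> CD R n with
  | 0 => fun x y : R => x * y
  | m.+1 => fun u v =>
      (cd_add (cd_mul u.1 v.1) (cd_opp (cd_mul v.2 (cd_conj u.2))),
       cd_add (cd_mul (cd_conj u.1) v.2) (cd_mul v.1 u.2))
  end.

Fixpoint cd_e (n : nat) (a : nat) : CD R n :=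
  match n return CD R n with
  | 0 => if a == 0%N then (1 : R) else 0
  | m.+1 => if (a < 2 ^ m)%N then (cd_e m a, cd_zero m)
            else (cd_zero m, cd_e m (a - 2 ^ m))
  end.

End CayleyDickson.

Definition sed_e (R : pzRingType) (a : 'I_16) : CD R 4 := cd_e R 4 a.

Definition imag_units : {set 'I_16} := [set a : 'I_16 | a != ord0].

Definition triple_with (R : pzRingType) (kind : nat -> nat -> nat -> bool)
  (T : {set 'I_16}) : Prop :=
  exists a b c : 'I_16,
    [/\ [&& (0 < a)%N, (a < b)%N, (b < c)%N & kind a b c], T = [set a; b; c] &
        cd_mul (sed_e R a) (sed_e R b) = sed_e R c \/
        cd_mul (sed_e R a) (sed_e R b) = cd_opp (sed_e R c)].

Definition distinguished_triples (R : pzRingType) : {set {set 'I_16}} :=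
  [set T : {set 'I_16} | `[< triple_with R (fun _ _ _ => true) T >] ].

Definition ordinary_triples (R : pzRingType) : {set {set 'I_16}} :=
  [set T : {set 'I_16} | `[< triple_with R (fun a b c => a + b == c)%N T >] ].

Definition defective_triples (R : pzRingType) : {set {set 'I_16}} :=
  [set T : {set 'I_16} | `[< triple_with R (fun a b c => a + b != c)%N T >] ].

Definition special_units : {set 'I_16} :=
  [set (inord 1 : 'I_16); inord 2; inord 4; inord 8; inord 15].

(* Point-line incidence structures given as (point set P, set L of lines),   *)
(* each line being the set of points incident with it.                       *)

Definition inc_iso (pT qT : finType) (P : {set pT}) (L : {set {set pT}})
  (Q : {set qT}) (M : {set {set qT}}) : Prop :=
  exists f : pT -> qT,
    [/\ {in P &, injective f}, f @: P = Q & [set f @: (l : {set pT}) | l in L] = M].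

Definition G2_points (n : nat) : {set {set 'I_n}} :=
  [set S : {set 'I_n} | #|S| == 2%N].

Definition G2_lines (n : nat) : {set {set {set 'I_n}}} :=
  [set [set p in G2_points n | p \subset S] | S : {set 'I_n} in [set S : {set 'I_n} | #|S| == 3%N]].

Definition is_hyperplane (T : finType) (P : {set T}) (L : {set {set T}})
  (H : {set T}) : bool :=
  (H \proper P) && [forall l in L, (l \subset H) || (#|l :&: H| == 1%N)].

Definition hyperplanes (T : finType) (P : {set T}) (L : {set {set T}}) :
  {set {set T}} := [set H : {set T} | is_hyperplane P L H].

Definition veldkamp_line (T : finType) (P : {set T}) (L : {set {set T}})
  (H1 H2 : {set T}) : {set {set T}} :=
  [set H in hyperplanes P L |
     [|| H == H1, H == H2 |
         (H1 :&: H2 == H1 :&: H) && (H1 :&: H == H2 :&: H)]].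

Definition veldkamp_lines (T : finType) (P : {set T}) (L : {set {set T}}) :
  {set {set {set T}}} :=
  [set veldkamp_line P L H1 H2 |
     H1 in hyperplanes P L, H2 in hyperplanes P L & H1 != H2].

Definition collinear (T : finType) (L : {set {set T}}) (p q : T) : bool :=
  [exists l in L, (p \in l) && (q \in l)].

(* Main.v *)
Require Import Defs.
From HB Require Import structures.
From mathcomp Require Import all_boot all_order all_algebra.
From mathcomp Require Import boolp reals.
Set Implicit Arguments.
Unset Strict Implicit.
Import GRing.Theory Num.Theory.

Fixpoint cd_map (R S : Type) (f : R -> S) (n : nat) : CD R n -> CD S n :=
  match n return CD R n -> CD S n with
  | 0 => f
  | m.+1 => fun u => (cd_map f u.1, cd_map f u.2)
  end.

Section Map.
Variables (R S : pzRingType) (f : {rmorphism R -> S}).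

Lemma cd_map_zero n : cd_map f (cd_zero R n) = cd_zero S n.
Proof. by elim: n => [|n IH] /=; rewrite ?rmorph0 ?IH. Qed.
Lemma cd_map_add n (u v : CD R n) : cd_map f (cd_add u v) = cd_add (cd_map f u) (cd_map f v).
Proof. by elim: n u v => [|n IH] u v /=; rewrite ?rmorphD ?IH. Qed.
Lemma cd_map_opp n (u : CD R n) : cd_map f (cd_opp u) = cd_opp (cd_map f u).
Proof. by elim: n u => [|n IH] u /=; rewrite ?rmorphN ?IH. Qed.
Lemma cd_map_conj n (u : CD R n) : cd_map f (cd_conj u) = cd_conj (cd_map f u).
Proof. by elim: n u => [|n IH] u /=; rewrite ?cd_map_opp ?IH. Qed.
Lemma cd_map_mul n (u v : CD R n) : cd_map f (cd_mul u v) = cd_mul (cd_map f u) (cd_map f v).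
Proof.
elim: n u v => [|n IH] u v /=; first by rewrite rmorphM.
by rewrite !cd_map_add !cd_map_opp !IH !cd_map_conj.
Qed.
Lemma cd_map_e n a : cd_map f (cd_e R n a) = cd_e S n a.
Proof.
elim: n a => [|n IH] a /=; first by case: (a == 0)%N; rewrite ?rmorph1 ?rmorph0.
by case: ifP => _ /=; rewrite IH cd_map_zero.
Qed.
Lemma cd_map_inj n : injective f -> injective (@cd_map _ _ f n).
Proof.
move=> fi; elim: n => [|n IH] //= [u1 u2] [v1 v2] /= [] /IH -> /IH -> //.
Qed.
End Map.

Fixpoint cd_eqb (n : nat) : CD int n -> CD int n -> bool :=
  match n return CD int n -> CD int n -> bool with
  | 0 => fun x y : int => x == y
  | m.+1 => fun u v => cd_eqb u.1 v.1 && cd_eqb u.2 v.2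
  end.

Lemma cd_eqbP n (u v : CD int n) : reflect (u = v) (cd_eqb u v).
Proof.
elim: n u v => [|n IH] /=; first by move=> u v; apply: eqP.
move=> [u1 u2] [v1 v2] /=; apply: (iffP andP) => [[/IH -> /IH ->]|[-> ->]] //.
by split; apply/IH.
Qed.

Definition Pint (a b c : 'I_16) : bool :=
  cd_eqb (cd_mul (sed_e int a) (sed_e int b)) (sed_e int c) ||
  cd_eqb (cd_mul (sed_e int a) (sed_e int b)) (cd_opp (sed_e int c)).


Lemma PintE (R : realType) (a b c : 'I_16) :
  (cd_mul (sed_e R a) (sed_e R b) = sed_e R c \/
   cd_mul (sed_e R a) (sed_e R b) = cd_opp (sed_e R c)) <-> Pint a b c.
Proof.
pose f : {rmorphism int -> R} := intr.
have fi : injective f := intr_inj.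
have E (x : 'I_16) : sed_e R x = cd_map f (sed_e int x) by rewrite /sed_e cd_map_e.
rewrite (E a) (E b) (E c).
Time rewrite -cd_map_mul.
Time rewrite -cd_map_opp /Pint.
split.
  by case=> /(cd_map_inj fi) ->; apply/orP; [left|right]; apply/cd_eqbP.
by case/orP=> /cd_eqbP ->; [left|right].
Qed.


Definition Sn (n : nat) (s : seq nat) : {set 'I_n} := [set x : 'I_n | val x \in s].
Lemma mS n s (x : 'I_n) : (x \in Sn n s) = (val x \in s).
Proof. by rewrite inE. Qed.
Definition norm n (s : seq nat) := filter (fun k => k \in s) (iota 0 n).
Definition seqeq n s t := norm n s == norm n t.

Lemma eqS n s t : (Sn n s == Sn n t) = seqeq n s t.
Proof.
apply/eqP/eqP => [E|E].
  apply: eq_in_filter => k; rewrite mem_iota /= add0n => klt.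
  by move/setP: E => /(_ (Ordinal klt)); rewrite !mS.
apply/setP => x; rewrite !mS.
have := congr1 (fun l => val x \in l) E; rewrite /= !mem_filter mem_iota /= ltn_ord.
by rewrite !andbT.
Qed.
Lemma seqeqP n s t : seqeq n s t -> Sn n s = Sn n t.
Proof. by rewrite -eqS => /eqP. Qed.

Definition countM n (s : seq nat) := count (fun k => k \in s) (iota 0 n).
Lemma cardS n s : #|Sn n s| = countM n s.
Proof.
rewrite cardE /enum_mem -enumT -(size_map val) /countM -size_filter.
congr size; rewrite -val_enum_ord [in RHS]filter_map enumT; congr map.
by apply: eq_filter => x /=; rewrite mS.
Qed.

Definition subM n (s t : seq nat) := all (fun k => (k \in s) ==> (k \in t)) (iota 0 n).
Lemma subS n s t : (Sn n s \subset Sn n t) = subM n s t.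
Proof.
apply/subsetP/allP => [H k|H x]; rewrite ?mem_iota /= ?add0n.
  move=> klt; apply/implyP => ks.
  by have := H (Ordinal klt); rewrite !mS; apply.
by rewrite !mS => xs; have := H (val x); rewrite mem_iota /= add0n ltn_ord xs; apply.
Qed.
Definition interM (s t : seq nat) := filter (fun k => k \in t) s.
Lemma interS n s t : Sn n s :&: Sn n t = Sn n (interM s t).
Proof. by apply/setP => x; rewrite !inE mem_filter andbC. Qed.

Lemma in_setseq (T : finType) (s : seq T) x : (x \in [set:: s]) = (x \in s).
Proof. by rewrite inE. Qed.
Lemma imset_seq (aT rT : finType) (f : aT -> rT) (s : seq aT) :
  f @: [set:: s] = [set:: map f s].
Proof.
apply/setP => y; rewrite in_setseq; apply/idP/idP.
  by case/imsetP => x; rewrite in_setseq => xs ->; apply: map_f.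
by case/mapP => x xs ->; apply: imset_f; rewrite in_setseq.
Qed.
Lemma filter_setseq (T : finType) (s : seq T) (p : pred T) :
  [set x in [set:: s] | p x] = [set:: filter p s].
Proof. by apply/setP => x; rewrite !inE mem_filter andbC. Qed.
Lemma forall_setseq (T : finType) (s : seq T) (p : pred T) :
  [forall x in [set:: s], p x] = all p s.
Proof.
apply/forallP/allP => [H x xs|H x]; first by have := H x; rewrite in_setseq xs.
by apply/implyP; rewrite in_setseq; apply: H.
Qed.
Lemma exists_setseq (T : finType) (s : seq T) (p : pred T) :
  [exists x in [set:: s], p x] = has p s.
Proof.
apply/existsP/hasP => [[x /andP[]]|[x xs px]]; rewrite ?in_setseq; first by exists x.
by exists x; rewrite in_setseq xs.
Qed.
Lemma setseq_eq (X : eqType) (T : finType) (D : X -> T) (r : X -> X -> bool)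
  (A B : seq X) : (forall x y, r x y -> D x = D y) ->
  all (fun x => has (r x) B) A -> all (fun y => has (r y) A) B ->
  [set:: map D A] = [set:: map D B].
Proof.
move=> Hr HA HB; apply/setP => z; rewrite !in_setseq.
apply/mapP/mapP => [[x xA ->]|[y yB ->]].
  by have /hasP[y yB /Hr ->] := allP HA x xA; exists y.
by have /hasP[x xA /Hr ->] := allP HB y yB; exists x.
Qed.
Lemma card_setseq (T : finType) (s : seq T) : uniq s -> #|[set:: s]| = size s.
Proof. by move=> us; rewrite cardsE; apply/card_uniqP. Qed.
Lemma uniq_mapS n (l : seq (seq nat)) : uniq (map (norm n) l) -> uniq (map (Sn n) l).
Proof.
elim: l => //= x l IH /andP[nx ul]; rewrite IH // andbT.
apply/mapP => [[y yl /eqP]]; rewrite eqS => /eqP E.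
by apply: (negP nx); rewrite E; apply: map_f.
Qed.

Fixpoint subs (s : seq nat) : seq (seq nat) :=
  if s is x :: s' then subs s' ++ map (cons x) (subs s') else [:: [::]].
Lemma filter_subs (p : pred nat) s : filter p s \in subs s.
Proof.
elim: s => [|x s IH] //=; rewrite mem_cat; case: (p x); last by rewrite IH.
by rewrite (mem_map (fun a b => _)) ?IH ?orbT //; move=> a b [].
Qed.
Lemma codeP n (A : {set 'I_n}) l : A \subset Sn n l ->
  exists2 c, c \in subs l & A = Sn n c.
Proof.
move=> /subsetP sub; exists (filter (fun k => [exists x in A, val x == k]) l).
  exact: filter_subs.
apply/setP => x; rewrite mS mem_filter.
apply/idP/andP => [xA|[/existsP[y /andP[yA /eqP/val_inj <-]] _ //]].
by split; [apply/existsP; exists x; rewrite xA eqxx | rewrite -mS; apply: sub].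
Qed.

Definition ii (k : nat) : 'I_16 := Ordinal (ltn_pmod k (isT : (0 < 16)%N)).
Lemma val_ii k : (k < 16)%N -> val (ii k) = k.
Proof. by move=> h; rewrite /= modn_small. Qed.

Definition PintN (a b c : nat) : bool :=
  cd_eqb (cd_mul (cd_e int 4 a) (cd_e int 4 b)) (cd_e int 4 c) ||
  cd_eqb (cd_mul (cd_e int 4 a) (cd_e int 4 b)) (cd_opp (cd_e int 4 c)).

Lemma set3S (a b c : 'I_16) : [set a; b; c] = Sn 16 [:: val a; val b; val c].
Proof. by apply/setP => x; rewrite mS !inE -!val_eqE ?orbF orbA. Qed.
Lemma mem_ord_iota n (a : 'I_n) : (val a \in iota 0 n).
Proof. by rewrite mem_iota /= add0n ltn_ord. Qed.

Definition tcheck (kind : nat -> nat -> nat -> bool) (l : seq (seq nat)) :=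
  all (fun a => all (fun b => all (fun c =>
     [&& (0 < a)%N, (a < b)%N, (b < c)%N, kind a b c & PintN a b c] ==>
       has (seqeq 16 [:: a; b; c]) l) (iota 0 16)) (iota 0 16)) (iota 0 16)
  && all (fun d => if d is [:: a; b; c] then
       [&& (c < 16)%N, (0 < a)%N, (a < b)%N, (b < c)%N, kind a b c & PintN a b c]
       else false) l.

Lemma tripleE (R : realType) (kind : nat -> nat -> nat -> bool) (l : seq (seq nat)) :
  tcheck kind l ->
  [set T : {set 'I_16} | `[< triple_with R kind T >]] = [set:: map (Sn 16) l].
Proof.
case/andP => /allP C1 /allP C2.
apply/setP => T; rewrite inE in_setseq; apply/idP/idP.
  move/asboolP => [a [b [c [/and4P[a0 ab bc k] -> /PintE Pa]]]].
  have := allP (allP (C1 _ (mem_ord_iota a)) _ (mem_ord_iota b)) _ (mem_ord_iota c).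
  have Pa' : PintN a b c := Pa.
  rewrite a0 ab bc k Pa' /= => /hasP[d dl E].
  by rewrite set3S (seqeqP E); apply: map_f.
case/mapP => d dl ->; have := C2 d dl.
case: d dl => [|a [|b [|c []]]] //= dl /and5P[c16 a0 ab bc /andP[k Pa]].
have b16 := ltn_trans bc c16; have a16 := ltn_trans ab b16.
apply/asboolP; exists (ii a), (ii b), (ii c).
rewrite set3S !val_ii //; split => //; first by rewrite a0 ab bc k.
by apply/PintE; rewrite /Pint /sed_e !val_ii.
Qed.

Definition Dl : seq (seq nat) := [:: [:: 3; 5; 6]; [:: 3; 9; 10]; [:: 3; 13; 14]; [:: 5; 9; 12]; [:: 5; 11; 14]; [:: 6; 10; 12]; [:: 6; 11; 13]; [:: 7; 9; 14]; [:: 7; 10; 13]; [:: 7; 11; 12]].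
Definition Ol : seq (seq nat) := [:: [:: 1; 2; 3]; [:: 1; 4; 5]; [:: 1; 6; 7]; [:: 1; 8; 9]; [:: 1; 10; 11]; [:: 1; 12; 13]; [:: 1; 14; 15]; [:: 2; 4; 6]; [:: 2; 5; 7]; [:: 2; 8; 10]; [:: 2; 9; 11]; [:: 2; 12; 14]; [:: 2; 13; 15]; [:: 3; 4; 7]; [:: 3; 8; 11]; [:: 3; 12; 15]; [:: 4; 8; 12]; [:: 4; 9; 13]; [:: 4; 10; 14]; [:: 4; 11; 15]; [:: 5; 8; 13]; [:: 5; 10; 15]; [:: 6; 8; 14]; [:: 6; 9; 15]; [:: 7; 8; 15]].
Definition Tl : seq (seq nat) := [:: [:: 1; 2; 3]; [:: 1; 4; 5]; [:: 1; 6; 7]; [:: 1; 8; 9]; [:: 1; 10; 11]; [:: 1; 12; 13]; [:: 1; 14; 15]; [:: 2; 4; 6]; [:: 2; 5; 7]; [:: 2; 8; 10]; [:: 2; 9; 11]; [:: 2; 12; 14]; [:: 2; 13; 15]; [:: 3; 4; 7]; [:: 3; 5; 6]; [:: 3; 8; 11]; [:: 3; 9; 10]; [:: 3; 12; 15]; [:: 3; 13; 14]; [:: 4; 8; 12]; [:: 4; 9; 13]; [:: 4; 10; 14]; [:: 4; 11; 15]; [:: 5; 8; 13]; [:: 5; 9; 12]; [:: 5; 10; 15]; [:: 5; 11; 14]; [:: 6; 8; 14]; [:: 6; 9; 15]; [:: 6; 10; 12]; [:: 6; 11; 13]; [:: 7; 8; 15]; [:: 7; 9; 14]; [:: 7;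 10; 13]; [:: 7; 11; 12]].
Lemma chkD : tcheck (fun a b c => a + b != c)%N Dl.
Proof. Time by vm_compute. Qed.
Lemma chkO : tcheck (fun a b c => a + b == c)%N Ol.
Proof. Time by vm_compute. Qed.
Lemma chkT : tcheck (fun _ _ _ => true) Tl.
Proof. Time by vm_compute. Qed.
Lemma defE (R : realType) : defective_triples R = [set:: map (Sn 16) Dl].
Proof. exact: tripleE chkD. Qed.
Lemma ordE (R : realType) : ordinary_triples R = [set:: map (Sn 16) Ol].
Proof. exact: tripleE chkO. Qed.
Lemma distE (R : realType) : distinguished_triples R = [set:: map (Sn 16) Tl].
Proof. exact: tripleE chkT. Qed.

Definition kSubs m k := filter (fun c => countM m c == k) (subs (iota 0 m)).

Lemma cardset_eq m k :
  [set A : {set 'I_m} | #|A| == k] = [set:: map (Sn m) (kSubs m k)].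
Proof.
apply/setP => A; rewrite inE in_setseq; apply/idP/idP.
  move=> cA; have /codeP[c cs E] : A \subset Sn m (iota 0 m).
    by apply/subsetP => x _; rewrite mS mem_ord_iota.
  by rewrite E; apply: map_f; rewrite mem_filter cs -cardS -E cA.
by case/mapP => c; rewrite mem_filter => /andP[ck _] ->; rewrite cardS.
Qed.

Lemma G2pE m : G2_points m = [set:: map (Sn m) (kSubs m 2)].
Proof. exact: cardset_eq. Qed.

Definition D3 m (x : seq (seq nat)) : {set {set 'I_m}} := [set:: map (Sn m) x].

Lemma G2lE m : G2_lines m =
  [set:: map (D3 m) (map (fun t => filter (fun p => subM m p t) (kSubs m 2)) (kSubs m 3))].
Proof.
rewrite /G2_lines cardset_eq G2pE imset_seq -!map_comp.
apply/setP => X; rewrite !in_setseq; congr (_ \in _); apply: eq_map => t /=.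
rewrite filter_setseq filter_map /D3.
by rewrite (@eq_filter _ _ (fun p => subM m p t)) // => p /=; exact: subS.
Qed.

Lemma imsetS16 (rT : finType) (f : 'I_16 -> rT) s : all (fun k => k < 16) s ->
  f @: Sn 16 s = [set:: map (fun k => f (ii k)) s].
Proof.
move=> /allP s16; apply/setP => y; rewrite in_setseq; apply/idP/idP.
  case/imsetP => x; rewrite mS => xs ->; apply/mapP; exists (val x) => //.
  by congr f; apply: val_inj; rewrite val_ii // ltn_ord.
case/mapP => k ks ->; apply: imset_f; by rewrite mS val_ii ?s16.
Qed.

Definition eqSS m (x y : seq (seq nat)) :=
  all (fun u => has (seqeq m u) y) x && all (fun v => has (seqeq m v) x) y.
Lemma eqSSP m x y : eqSS m x y -> D3 m x = D3 m y.
Proof. by case/andP => h1 h2; apply: setseq_eq h1 h2 => ??; apply: seqeqP. Qed.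

Definition isocheck m (pts : seq nat) (lines : seq (seq nat)) (tbl : seq (seq nat)) :=
  let tb := fun k => nth [::] tbl k in
  let A := map (map tb) lines in
  let B := map (fun t => filter (fun p => subM m p t) (kSubs m 2)) (kSubs m 3) in
  [&& all (fun k => k < 16) pts, all (all (fun k => k < 16)) lines,
      all (fun a => all (fun b => seqeq m (tb a) (tb b) ==> (a == b)) pts) pts,
      eqSS m (map tb pts) (kSubs m 2),
      all (fun x => has (eqSS m x) B) A & all (fun y => has (eqSS m y) A) B].

Lemma isoG2 m pts lines tbl : isocheck m pts lines tbl ->
  inc_iso (Sn 16 pts) [set:: map (Sn 16) lines] (G2_points m) (G2_lines m).
Proof.
case/and5P => p16 /allP l16 /allP inj eqP2 /andP[L1 L2].
pose tb := fun k => nth [::] tbl k.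
exists (fun x : 'I_16 => Sn m (tb x)); split.
- move=> x y; rewrite !mS => xp yp /eqP; rewrite eqS => E.
  by apply: val_inj; have := allP (inj _ xp) _ yp; rewrite E => /eqP.
- rewrite imsetS16 // G2pE.
  apply: (@eq_trans _ _ [set:: map (Sn m) (map tb pts)]).
    apply/setP => X; rewrite !in_setseq; congr (_ \in _).
    rewrite -map_comp; apply/eq_in_map => k kp /=.
    by rewrite modn_small //; exact: (allP p16 k kp).
  by case/andP: eqP2 => h1 h2; apply: setseq_eq h1 h2 => ??; apply: seqeqP.
rewrite G2lE imset_seq.
apply: (@eq_trans _ _ [set:: map (D3 m) (map (map tb) lines)]).
  apply/setP => X; rewrite !in_setseq; congr (_ \in _).
  rewrite -!map_comp; apply/eq_in_map => d dl /=; rewrite imsetS16 ?l16 //.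
  rewrite /D3 -map_comp; apply/setP => Y; rewrite !in_setseq; congr (_ \in _).
  apply/eq_in_map => k kd /=.
  by rewrite modn_small //; exact: (allP (l16 d dl) k kd).
by apply: setseq_eq L1 L2 => ??; apply: eqSSP.
Qed.

Definition Pl : seq nat := [:: 3; 5; 6; 7; 9; 10; 11; 12; 13; 14].
Definition Hl : seq (seq nat) := [:: [:: 3; 5; 6; 7]; [:: 3; 7; 11; 12]; [:: 3; 9; 10; 11]; [:: 3; 12; 13; 14]; [:: 5; 7; 10; 13]; [:: 5; 9; 12; 13]; [:: 5; 10; 11; 14]; [:: 6; 7; 9; 14]; [:: 6; 9; 11; 13]; [:: 6; 10; 12; 14]; [:: 3; 5; 6; 9; 10; 12]; [:: 3; 5; 6; 11; 13; 14]; [:: 3; 7; 9; 10; 13; 14]; [:: 5; 7; 9; 11; 12; 14]; [:: 6; 7; 10; 11; 12; 13]].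
Definition phiv : seq nat := [:: 7; 3; 11; 12; 5; 13; 10; 6; 9; 14; 15; 8; 4; 2; 1].
Definition tbl5 : seq (seq nat) := [:: [::]; [::]; [::]; [:: 0; 1]; [::]; [:: 0; 2]; [:: 1; 2]; [:: 3; 4]; [::]; [:: 0; 3]; [:: 1; 3]; [:: 2; 4]; [:: 2; 3]; [:: 1; 4]; [:: 0; 4]; [::]].
Definition tbls : seq (seq (seq nat)) := [:: [::]; [::]; [::]; [::]; [::]; [::]; [::]; [::]; [::]; [::]; [:: [::]; [::]; [::]; [:: 0; 1]; [::]; [:: 0; 2]; [:: 1; 2]; [::]; [::]; [:: 0; 3]; [:: 1; 3]; [::]; [:: 2; 3]; [::]; [::]; [::]]; [:: [::]; [::]; [::]; [:: 0; 1]; [::]; [:: 0; 2]; [:: 1; 2]; [::]; [::]; [::]; [::]; [:: 2; 3]; [::]; [:: 1; 3]; [:: 0; 3]; [::]]; [:: [::]; [::]; [::]; [:: 0; 1]; [::]; [::]; [::]; [:: 2; 3]; [::]; [:: 0; 2]; [:: 1; 2]; [::]; [::]; [:: 1; 3]; [:: 0; 3]; [::]]; [:: [::]; [::]; [::]; [::]; [::]; [:: 0; 1]; [::]; [:: 2; 3]; [::]; [:: 0; 2]; [::]; [:: 1; 3]; [:: 1; 2]; [::]; [:: 0; 3]; [::]]; [:: [::]; [::]; [::]; [::]; [::]; [::]; [:: 0; 1]; [:: 2; 3]; [::]; [::]; [:: 0; 2]; [:: 1; 3]; [:: 1; 2]; [:: 0; 3]; [::]; [::]]].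
Lemma chkIso5 : isocheck 5 Pl Dl tbl5.
Proof. Time by vm_compute. Qed.

Definition hypM (h : seq nat) :=
  (subM 16 h Pl && ~~ subM 16 Pl h) &&
  all (fun d => subM 16 d h || (countM 16 (interM d h) == 1)) Dl.

Lemma hypE h : is_hyperplane (Sn 16 Pl) [set:: map (Sn 16) Dl] (Sn 16 h) = hypM h.
Proof.
rewrite /is_hyperplane properE !subS forall_setseq all_map; congr andb.
by apply: eq_all => d /=; rewrite subS interS cardS.
Qed.

Lemma chkHyp : all (fun h => hypM h ==> has (seqeq 16 h) Hl) (subs Pl) && all hypM Hl.
Proof. Time by vm_compute. Qed.

Lemma hypsE : hyperplanes (Sn 16 Pl) [set:: map (Sn 16) Dl] = [set:: map (Sn 16) Hl].
Proof.
case/andP: chkHyp => /allP C1 /allP C2.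
apply/setP => H; rewrite inE in_setseq; apply/idP/idP.
  move=> hH; have /codeP[h hs E] : H \subset Sn 16 Pl.
    by move: hH; rewrite /is_hyperplane => /andP[/proper_sub].
  move: hH; rewrite E hypE => hh; have /hasP[h' h'l /seqeqP ->] := implyP (C1 h hs) hh.
  exact: map_f.
by case/mapP => h hl ->; rewrite hypE C2.
Qed.

Lemma allI16 (p : nat -> bool) : all p (iota 0 16) -> forall x : 'I_16, p (val x).
Proof. by move=> /allP h x; apply: h; apply: mem_ord_iota. Qed.

Definition spl : seq nat := [:: 1; 2; 4; 8; 15].
Lemma specialE : special_units = Sn 16 spl.
Proof.
apply/setP => x; rewrite mS !inE -!val_eqE /= !inordK //.
by rewrite !orbA.
Qed.
Lemma byI16 (p q : 'I_16 -> bool) : all (fun k => p (ii k) == q (ii k)) (iota 0 16) ->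
  forall x : 'I_16, p x = q x.
Proof.
move=> /allP h x; have /eqP := h _ (mem_ord_iota x).
suff -> : ii (val x) = x by [].
by apply: val_inj; rewrite val_ii // ltn_ord.
Qed.
Lemma imagE : imag_units = Sn 16 (iota 1 15).
Proof.
apply/setP => x; rewrite [in LHS]inE mS.
exact: (@byI16 (fun x => x != ord0) (fun x => val x \in iota 1 15) ltac:(by vm_compute) x).
Qed.
Lemma PE : imag_units :\: special_units = Sn 16 Pl.
Proof.
apply/setP => x; rewrite [in LHS]inE specialE [in LHS]inE !mS imagE mS.
exact: (@byI16 (fun x => (val x \notin spl) && (val x \in iota 1 15)) (fun x => val x \in Pl) ltac:(by vm_compute) x).
Qed.

Definition phiM h := nth 0 phiv (find (seqeq 16 h) Hl).
Definition phi (H : {set 'I_16}) : 'I_16 :=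
  ii (nth 0 phiv (find (fun h => H == Sn 16 h) Hl)).
Lemma phiE h : phi (Sn 16 h) = ii (phiM h).
Proof. by rewrite /phi (eq_find (eqS 16 h)). Qed.
Lemma phiM16 h : phiM h < 16.
Proof.
rewrite /phiM; case: (ltnP (find (seqeq 16 h) Hl) (size phiv)) => [lt|ge].
  by have := mem_nth 0 lt; move: (nth _ _ _); apply/allP; vm_compute.
by rewrite nth_default.
Qed.
Lemma iiS l : all (fun k => k < 16) l -> [set:: map ii l] = Sn 16 l.
Proof.
move=> /allP l16; apply/setP => x; rewrite in_setseq mS; apply/mapP/idP.
  by case=> k kl ->; rewrite val_ii // l16.
move=> xl; exists (val x) => //; apply: val_inj; by rewrite val_ii // ltn_ord.
Qed.

Definition vlM (h1 h2 h : seq nat) :=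
  [|| seqeq 16 h h1, seqeq 16 h h2 |
      seqeq 16 (interM h1 h2) (interM h1 h) && seqeq 16 (interM h1 h) (interM h2 h)].
Lemma vlE h1 h2 :
  veldkamp_line (Sn 16 Pl) [set:: map (Sn 16) Dl] (Sn 16 h1) (Sn 16 h2) =
  [set:: map (Sn 16) (filter (vlM h1 h2) Hl)].
Proof.
rewrite /veldkamp_line hypsE filter_setseq filter_map.
apply/setP => X; rewrite !in_setseq; congr (_ \in map _ _).
by apply: eq_filter => h /=; rewrite !interS !eqS.
Qed.
Definition imgM h1 h2 := map phiM (filter (vlM h1 h2) Hl).
Lemma phiV h1 h2 :
  phi @: veldkamp_line (Sn 16 Pl) [set:: map (Sn 16) Dl] (Sn 16 h1) (Sn 16 h2) =
  Sn 16 (imgM h1 h2).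
Proof.
rewrite vlE imset_seq -map_comp -iiS; last by apply/allP => k /mapP[h _ ->]; apply: phiM16.
apply/setP => X; rewrite !in_setseq; congr (_ \in _).
by rewrite /imgM -map_comp; apply: eq_map => h /=; rewrite phiE.
Qed.

Lemma chkI : all (fun n => all (fun d => n \notin d) Dl == (n \in spl)) (iota 1 15).
Proof. by vm_compute. Qed.
Lemma chkCnt : all (fun n => [&& size (filter (fun d => n \in d) Dl) == 3,
   uniq (map (norm 16) (filter (fun d => n \in d) Dl)),
   size (filter (fun d => n \in d) Ol) == 4 &
   uniq (map (norm 16) (filter (fun d => n \in d) Ol))]) Pl.
Proof. by vm_compute. Qed.
Lemma chkPhi1 : all (fun h1 => all (fun h2 => (phiM h1 == phiM h2) ==> seqeq 16 h1 h2) Hl) Hl.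
Proof. by vm_compute. Qed.
Lemma chkPhi2 : seqeq 16 (map phiM Hl) (iota 1 15).
Proof. by vm_compute. Qed.
Lemma chkVL1 : all (fun h1 => all (fun h2 => ~~ seqeq 16 h1 h2 ==> has (seqeq 16 (imgM h1 h2)) Tl) Hl) Hl.
Proof. by vm_compute. Qed.
Lemma chkVL2 : all (fun t => has (fun h1 => has (fun h2 => ~~ seqeq 16 h1 h2 && seqeq 16 (imgM h1 h2) t) Hl) Hl) Tl.
Proof. by vm_compute. Qed.
Lemma chkH : all (fun h => [&& (countM 16 h == 4) == has (fun d => phiM h \in d) Dl,
   (countM 16 h == 6) == (phiM h \in spl),
   (countM 16 h == 4) ==> ((phiM h \in Pl) && seqeq 16 h (phiM h :: filter (fun q => (q != phiM h) && ~~ has (fun d => (phiM h \in d) && (q \in d)) Dl) Pl)) &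
   (countM 16 h == 6) ==> isocheck 4 h (filter (fun d => subM 16 d h) Dl) (nth [::] tbls (find (seqeq 16 h) Hl))]) Hl.
Proof. by vm_compute. Qed.


Unset Implicit Arguments.
Local Open Scope ring_scope.
Theorem mainTheorem2 (R : realType) :
  (* (i) *)
  (forall a : 'I_16, a \in imag_units ->
     ((forall T, T \in defective_triples R -> a \notin T) <-> a \in special_units)) /\
  (forall a : 'I_16, a \in imag_units :\: special_units ->
     #|[set T in defective_triples R | a \in T]| = 3%N /\
     #|[set T in ordinary_triples R | a \in T]| = 4%N) /\
  (* (ii) *)
  inc_iso (imag_units :\: special_units) (defective_triples R)
          (G2_points 5) (G2_lines 5) /\
  (* (iii) *)
  (let P := imag_units :\: special_units in
   let L := defective_triples R in
   exists phi : {set 'I_16} -> 'I_16,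
     [/\ {in hyperplanes P L &, injective phi},
         phi @: hyperplanes P L = imag_units &
         [set phi @: (V : {set {set 'I_16}}) | V in veldkamp_lines P L] = distinguished_triples R] /\
     [/\
         {in hyperplanes P L, forall H : {set 'I_16},
            #|H| = 4%N <-> exists2 T, T \in defective_triples R & phi H \in T},
         {in hyperplanes P L, forall H : {set 'I_16},
            #|H| = 6%N <-> phi H \in special_units},
         {in hyperplanes P L, forall H : {set 'I_16}, #|H| = 4%N ->
            exists2 p, p \in P &
              H = p |: [set q in P | (q != p) && ~~ collinear L p q]} &
         {in hyperplanes P L, forall H : {set 'I_16}, #|H| = 6%N ->
            inc_iso H [set l in L | l \subset H] (G2_points 4) (G2_lines 4)}]).
Proof.
rewrite (defE R) (ordE R) (distE R) PE.
split.
  move=> a; rewrite imagE mS => ai; rewrite specialE mS.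
  have := allP chkI _ ai => /eqP <-.
  split => [H | /allP H T].
    apply/allP => d dl; have := H (Sn 16 d); rewrite in_setseq map_f // mS.
    by apply.
  by rewrite in_setseq => /mapP[d dl ->]; rewrite mS; apply: H.
split.
  move=> a; rewrite mS => ap; have /and4P[c1 u1 c2 u2] := allP chkCnt _ ap.
  rewrite !filter_setseq !filter_map.
  rewrite !(@eq_filter _ _ (fun d => val a \in d)); try by move=> d; rewrite /= mS.
  rewrite !card_setseq ?size_map; try apply: uniq_mapS => //.
  by split; apply/eqP.
split; first exact: (isoG2 chkIso5).
cbv zeta.
exists phi; split; first split.
- rewrite hypsE => H1 H2; rewrite !in_setseq => /mapP[h1 h1l ->] /mapP[h2 h2l ->].
  rewrite !phiE => /(congr1 val); rewrite !val_ii ?phiM16 // => E.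
  by apply: seqeqP; have := allP (allP chkPhi1 _ h1l) _ h2l; rewrite E eqxx.
- rewrite hypsE imset_seq imagE -(seqeqP chkPhi2) -iiS; last first.
    by apply/allP => k /mapP[h _ ->]; apply: phiM16.
  apply/setP => X; rewrite !in_setseq; congr (_ \in _).
  by rewrite -!map_comp; apply: eq_map => h /=; rewrite phiE.
- apply/setP => W; rewrite in_setseq; apply/imsetP/mapP.
    case=> V /imset2P[H1 H2 H1in H2in ->] ->.
    move: H2in; rewrite inE hypsE !in_setseq => /andP[/mapP[h2 h2l ->]].
    move: H1in; rewrite hypsE in_setseq => /mapP[h1 h1l ->]; rewrite eqS => ne.
    have /hasP[t tl E] := implyP (allP (allP chkVL1 _ h1l) _ h2l) ne.
    by exists t => //; rewrite phiV; apply: seqeqP.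
  case=> t tl ->.
  have /hasP[h1 h1l /hasP[h2 h2l /andP[ne E]]] := allP chkVL2 _ tl.
  exists (veldkamp_line (Sn 16 Pl) [set:: map (Sn 16) Dl] (Sn 16 h1) (Sn 16 h2)).
    apply/imset2P; exists (Sn 16 h1) (Sn 16 h2) => //.
      by rewrite hypsE in_setseq map_f.
    by rewrite inE hypsE in_setseq map_f //= eqS.
  by rewrite phiV; apply: seqeqP; rewrite /seqeq eq_sym.
- Time (rewrite hypsE; split => H; rewrite in_setseq => /mapP[h hl ->];
    rewrite cardS ?phiE; have /and4P[/eqP e4 /eqP e6 p4 i6] := allP chkH _ hl).
  + Time (split => [c4 | [T]]).
      Time (have := e4; rewrite c4 eqxx => /esym/hasP[d dl pd]).
      Time (by exists (Sn 16 d); rewrite ?in_setseq ?map_f // mS val_ii // phiM16).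
    Time (rewrite in_setseq => /mapP[d dl ->]; rewrite mS val_ii ?phiM16 // => pd).
    Time (by apply/eqP; rewrite e4; apply/hasP; exists d).
  + Time (rewrite specialE mS val_ii ?phiM16 // -e6).
    Time (by split => [->|/eqP]).
  + Time (move=> c4; move: p4; rewrite c4 eqxx implyTb => /andP[pp E]).
    Time (exists (ii (phiM h)); first by rewrite mS val_ii ?phiM16).
    Time (apply: (etrans (seqeqP E)); apply/setP => x).
    Time (rewrite [in LHS]mS in_cons mem_filter in_setU1 in_set mS -val_eqE val_ii ?phiM16 //).
    Time (rewrite /collinear exists_setseq has_map).
    Time (rewrite [in RHS](eq_has (a2 := fun d => (phiM h \in d) && (val x \in d))); last by move=> d; rewrite /= !mS val_ii ?phiM16).
    Time (by congr (_ || _); exact: andbC).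
  + Time (move=> c6; move: i6; rewrite c6 eqxx implyTb => iso).
    Time (rewrite filter_setseq filter_map).
    Time (rewrite (@eq_filter _ _ (fun d => subM 16 d h)); last by move=> d; rewrite /= subS).
    Time (exact: isoG2 iso).

Qed.
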